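(* Let $A$ be an associative commutative $\mathbb{C}$-algebra and $\Psi : A \to A$ an algebra automorphism, and regard $A$ as a subalgebra of the crossed product $A \rtimes_{\Psi} \mathbb{Z}$ via $a \mapsto a\delta^0$. Then the commutant $A' = \{ f \in A \rtimes_{\Psi}\mathbb{Z} : f * a = a * f \text{ for all } a \in A\}$ of $A$ in $A \rtimes_{\Psi} \mathbb{Z}$ is abelian; consequently $A'$ is the unique maximal abelian subalgebra of $A \rtimes_{\Psi} \mathbb{Z}$ containing $A$.
   Context: The crossed product $A \rtimes_{\Psi} \mathbb{Z}$ is the set of functions $f : \mathbb{Z} \to A$ with $f(n)=0$ for all but finitely many $n$, with pointwise addition and scalar multiplication and with multiplication given by twisted convolution $(f*g)(n) = \sum_{k\in\mathbb{Z}} f(k)\cdot \Psi^k(g(n-k))$, where $\Psi^k$ is the $k$-fold iterate of $\Psi$ (negative $k$ meaning iterates of $\Psi^{-1}$). Elements are written $f = \sum_n f_n \delta^n$ with $f_n = f(n)$, and $(f_n\delta^n)*(g_m\delta^m) = f_n \Psi^n(g_m)\delta^{n+m}$. *)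

(* Defs.v *)
From HB Require Import structures.
From mathcomp Require Import all_boot all_order all_algebra.
From mathcomp Require Import finmap.
From mathcomp Require Export complex.
Set Implicit Arguments. Unset Strict Implicit. Unset Printing Implicit Defensive.
Import Order.TTheory GRing.Theory Num.Theory.
Local Open Scope ring_scope.


Section CrossedProduct.
Variables (K : nzRingType) (A : lmodType K).

Definition is_comm_assoc_algebra (mul : A -> A -> A) : Prop :=
  [/\ forall x y z, mul x (mul y z) = mul (mul x y) z,
      forall x y, mul x y = mul y x,
      forall (c : K) x y z, mul (c *: x + y) z = c *: mul x z + mul y z &
      forall (c : K) x y z, mul z (c *: x + y) = c *: mul z x + mul z y].

Definition is_algebra_automorphism (mul : A -> A -> A) (Psi Psi' : A -> A) : Prop :=
  [/\ forall (c : K) x y, Psi (c *: x + y) = c *: Psi x + Psi y,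
      forall x y, Psi (mul x y) = mul (Psi x) (Psi y),
      cancel Psi Psi' & cancel Psi' Psi].

Definition iterz (Psi Psi' : A -> A) (k : int) : A -> A :=
  match k with
  | Posz n => iter n Psi
  | Negz n => iter n.+1 Psi'
  end.

(* elements of the crossed product: finitely supported functions Z -> A *)
Definition crossed (A0 : lmodType K) := {fsfun int -> A0 with 0}.

Variables (mul : A -> A -> A) (Psi Psi' : A -> A).

Definition cp_mul (f g : crossed A) : crossed A :=
  [fsfun n in [fset (k + l)%R | k in finsupp f, l in finsupp g]%fset
     => \sum_(k <- finsupp f) mul (f k) (iterz Psi Psi' k (g (n - k)%R))].

Definition cp_add (f g : crossed A) : crossed A :=
  [fsfun n in (finsupp f `|` finsupp g)%fset => f n + g n].
Definition cp_scale (c : K) (f : crossed A) : crossed A :=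
  [fsfun n in finsupp f => c *: f n].
Definition cp_zero : crossed A := [fsfun n in fset0%fset => (0 : A)].

Definition delta0 (a : A) : crossed A := [fsfun n in [fset (0%R : int)]%fset => a].

Definition commutant (f : crossed A) : Prop :=
  forall a : A, cp_mul f (delta0 a) = cp_mul (delta0 a) f.

Definition is_subalgebra (B : crossed A -> Prop) : Prop :=
  [/\ B cp_zero,
      forall f g, B f -> B g -> B (cp_add f g),
      forall c f, B f -> B (cp_scale c f) &
      forall f g, B f -> B g -> B (cp_mul f g)].

Definition is_abelian (B : crossed A -> Prop) : Prop :=
  forall f g, B f -> B g -> cp_mul f g = cp_mul g f.

Definition contains_A (B : crossed A -> Prop) : Prop :=
  forall a : A, B (delta0 a).

Definition max_abelian_containing_A (B : crossed A -> Prop) : Prop :=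
  [/\ is_subalgebra B, is_abelian B, contains_A B &
      forall B' : crossed A -> Prop, is_subalgebra B' -> is_abelian B' ->
        (forall f, B f -> B' f) -> forall f, B' f -> B f].
End CrossedProduct.

(* Main.v *)
Require Import Defs.
From mathcomp Require Import all_boot all_order all_algebra.
From mathcomp Require Import finmap complex.
From mathcomp Require Import reals.
From mathcomp Require Import zify.
Import GRing.Theory.
Local Open Scope ring_scope.

Section Aux.
Variables (R : realType) (A : lmodType R[i]).
Variables (mul : A -> A -> A) (Psi Psi' : A -> A).
Hypothesis HA : is_comm_assoc_algebra mul.
Hypothesis HP : is_algebra_automorphism mul Psi Psi'.

Lemma mulA x y z : mul x (mul y z) = mul (mul x y) z.
Proof. by case: HA. Qed.
Lemma mulC x y : mul x y = mul y x.
Proof. by case: HA. Qed.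
Lemma mulDl x y z : mul (x + y) z = mul x z + mul y z.
Proof. by case: HA => _ _ h _; have := h 1 x y z; rewrite !scale1r. Qed.
Lemma mul0 z : mul 0 z = 0.
Proof.
have h := mulDl 0 0 z; rewrite addr0 in h.
by apply: (@addrI _ (mul 0 z)); rewrite addr0 -h.
Qed.
Lemma mulx0 z : mul z 0 = 0.
Proof. by rewrite mulC mul0. Qed.
Lemma mulZl c x z : mul (c *: x) z = c *: mul x z.
Proof. by case: HA => _ _ h _; have := h c x 0 z; rewrite !addr0 mul0 addr0. Qed.
Lemma mul_suml (I : Type) (s : seq I) (F : I -> A) z :
  mul (\sum_(i <- s) F i) z = \sum_(i <- s) mul (F i) z.
Proof.
elim: s => [|x s IH]; first by rewrite !big_nil mul0.
by rewrite !big_cons mulDl IH.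
Qed.
Lemma mul_sumr (I : Type) (s : seq I) (F : I -> A) z :
  mul z (\sum_(i <- s) F i) = \sum_(i <- s) mul z (F i).
Proof. by rewrite mulC mul_suml; apply: eq_bigr => i _; rewrite mulC. Qed.

Lemma PsiK : cancel Psi Psi'. Proof. by case: HP. Qed.
Lemma Psi'K : cancel Psi' Psi. Proof. by case: HP. Qed.
Lemma PsiM x y : Psi (mul x y) = mul (Psi x) (Psi y). Proof. by case: HP. Qed.
Lemma Psi'M x y : Psi' (mul x y) = mul (Psi' x) (Psi' y).
Proof. by rewrite -{1}(Psi'K x) -{1}(Psi'K y) -PsiM PsiK. Qed.
Lemma Psi0 : Psi 0 = 0.
Proof.
case: HP => h0 _ _ _; have h := h0 1 0 0; rewrite !scale1r addr0 in h.
by apply: (@addrI _ (Psi 0)); rewrite addr0 -h.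
Qed.
Lemma Psi'0 : Psi' 0 = 0.
Proof. by rewrite -{1}Psi0 PsiK. Qed.

Local Notation itz := (iterz Psi Psi').

Lemma itz0 k : itz k 0 = 0.
Proof.
case: k => n /=; elim: n => [|n IH] /=; by rewrite ?IH ?Psi0 ?Psi'0.
Qed.

Lemma iter_mul (h : A -> A) n :
  (forall x y, h (mul x y) = mul (h x) (h y)) ->
  forall x y, iter n h (mul x y) = mul (iter n h x) (iter n h y).
Proof. move=> hM; elim: n => //= n IH x y; by rewrite IH hM. Qed.

Lemma itzM k x y : itz k (mul x y) = mul (itz k x) (itz k y).
Proof.
case: k => n /=; first exact: (iter_mul Psi n PsiM).
exact: (iter_mul Psi' n.+1 Psi'M).
Qed.

Lemma itzS k x : itz (k + 1) x = Psi (itz k x).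
Proof.
case: k => n.
  by have -> : (Posz n + 1 = Posz n.+1)%R by lia.
case: n => [|n]; first by rewrite /= Psi'K.
have -> : (Negz n.+1 + 1 = Negz n)%R by rewrite !NegzE; lia.
by rewrite /= Psi'K.
Qed.

Lemma itzP k x : itz (k - 1) x = Psi' (itz k x).
Proof. by rewrite -{2}(subrK 1 k) itzS PsiK. Qed.

Lemma itzD k m x : itz k (itz m x) = itz (k + m) x.
Proof.
case: k => n.
  elim: n => [|n IH]; first by rewrite add0r.
  rewrite /= in IH *; rewrite IH -itzS; congr (itz _ x); lia.
elim: n => [|n IH].
  by rewrite /= -itzP; congr (itz _ x); rewrite NegzE; lia.
rewrite /= in IH *; rewrite IH -itzP; congr (itz _ x); rewrite !NegzE; lia.
Qed.

Lemma sum_eq_seq (s1 s2 : seq int) (F : int -> A) :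
  uniq s1 -> uniq s2 ->
  (forall k, k \in s1 -> k \notin s2 -> F k = 0) ->
  (forall k, k \in s2 -> k \notin s1 -> F k = 0) ->
  \sum_(k <- s1) F k = \sum_(k <- s2) F k.
Proof.
move=> u1 u2 h1 h2.
have e1 : \sum_(k <- s1) F k = \sum_(k <- [seq k <- s1 | k \in s2]) F k.
  rewrite big_filter [RHS]big_mkcond /=; apply: eq_big_seq => k ks.
  by case: ifP => // /negbT; apply: h1.
have e2 : \sum_(k <- s2) F k = \sum_(k <- [seq k <- s2 | k \in s1]) F k.
  rewrite big_filter [RHS]big_mkcond /=; apply: eq_big_seq => k ks.
  by case: ifP => // /negbT; apply: h2.
rewrite e1 e2; apply: perm_big; apply: uniq_perm; rewrite ?filter_uniq //.
by move=> k; rewrite !mem_filter andbC.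
Qed.

Lemma fval (f : crossed A) k : k \notin finsupp f -> f k = 0.
Proof. by move=> h; rewrite (fsfun_dflt h). Qed.

Lemma cp_mulE f g n : cp_mul mul Psi Psi' f g n =
  \sum_(k <- finsupp f) mul (f k) (itz k (g (n - k))).
Proof.
rewrite /cp_mul fsfun_fun; case: ifP => // hn.
rewrite big_seq big1 // => k kf.
rewrite (@fval g) ?itz0 ?mulx0 //; apply/negP => kg.
move/negbT: hn => /negP; apply.
by rewrite (_ : n = k + (n - k)); [apply: in_imfset2 | rewrite addrC subrK].
Qed.

Lemma delta0E (a : A) (n : int) : delta0 a n = if n == 0 then a else 0.
Proof. by rewrite /delta0 fsfun_fun inE. Qed.

Lemma cp_addE (f g : crossed A) n : cp_add f g n = f n + g n.
Proof.
rewrite /cp_add fsfun_fun; case: ifP => // /negbT; rewrite inE negb_or => /andP[].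
by move=> /fval -> /fval ->; rewrite addr0.
Qed.

Lemma cp_scaleE (c : R[i]) (f : crossed A) n : cp_scale c f n = c *: f n.
Proof. by rewrite /cp_scale fsfun_fun; case: ifP => // /negbT /fval ->; rewrite scaler0. Qed.

Lemma cp_zeroE n : (@cp_zero _ A) n = 0.
Proof. by rewrite /cp_zero fsfun_fun. Qed.

Lemma mul_deltaE f a n : cp_mul mul Psi Psi' f (delta0 a) n = mul (f n) (itz n a).
Proof.
rewrite cp_mulE (sum_eq_seq _ [:: n]) ?big_seq1 ?subrr ?delta0E ?eqxx ?fset_uniq //.
- by move=> k _; rewrite inE delta0E subr_eq0 eq_sym => /negPf ->; rewrite itz0 mulx0.
- by move=> k; rewrite inE => /eqP -> /fval ->; rewrite mul0.
Qed.

Lemma delta_mulE f a n : cp_mul mul Psi Psi' (delta0 a) f n = mul a (f n).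
Proof.
rewrite cp_mulE (sum_eq_seq _ [:: 0]) ?big_seq1 ?subr0 ?delta0E ?eqxx ?fset_uniq //.
- by move=> k _; rewrite inE delta0E => /negPf ->; rewrite mul0.
- by move=> k; rewrite inE => /eqP -> /fval; rewrite delta0E eqxx => ->; rewrite !mul0.
Qed.

Lemma commutantP f : commutant mul Psi Psi' f <->
  (forall n a, mul (f n) (itz n a) = mul a (f n)).
Proof.
split=> h.
  by move=> n a; rewrite -mul_deltaE -delta_mulE h.
by move=> a; apply/fsfunP => n; rewrite mul_deltaE delta_mulE h.
Qed.

Lemma comm_abelian : is_abelian mul Psi Psi' (commutant mul Psi Psi').
Proof.
move=> f g /commutantP hf /commutantP hg; apply/fsfunP => n.
rewrite !cp_mulE.
pose h j := mul (g j) (f (n - j)).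
transitivity (\sum_(k <- finsupp f) h (n - k)).
  apply: eq_bigr => k _; rewrite /h hf; congr (mul _ (f _)); lia.
transitivity (\sum_(j <- finsupp g) h j); last first.
  by apply: eq_bigr => j _; rewrite /h hg mulC.
rewrite -(big_map (fun k => n - k) xpredT h).
apply: sum_eq_seq; rewrite ?fset_uniq //.
- rewrite map_inj_uniq ?fset_uniq // => x y /= e; lia.
- move=> j /mapP[k kf ->] kg; by rewrite /h (fval _ _ kg) mul0.
- move=> j jg jn; rewrite /h (@fval f) ?mulx0 //; apply: contra jn => H.
  by apply/mapP; exists (n - j) => //; lia.
Qed.

Lemma comm_sub : is_subalgebra mul Psi Psi' (commutant mul Psi Psi').
Proof.
split.
- by apply/commutantP => n a; rewrite cp_zeroE mul0 mulx0.
- move=> f g /commutantP hf /commutantP hg; apply/commutantP => n a.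
  rewrite !cp_addE; etransitivity; first exact: mulDl.
  rewrite hf hg; transitivity (mul (f n + g n) a); last exact: mulC.
  by etransitivity; [|symmetry; exact: mulDl]; rewrite !(mulC a).
- move=> c f /commutantP hf; apply/commutantP => n a.
  rewrite !cp_scaleE; etransitivity; first exact: mulZl.
  rewrite hf; transitivity (mul (c *: f n) a); last exact: mulC.
  by etransitivity; [|symmetry; exact: mulZl]; rewrite mulC.
- move=> f g /commutantP hf /commutantP hg; apply/commutantP => n a.
  rewrite !cp_mulE mul_suml mul_sumr; apply: eq_bigr => k _.
  have -> : itz n a = itz k (itz (n - k) a) by rewrite itzD; congr (itz _ a); lia.
  rewrite -mulA -itzM hg itzM mulA hf -mulA //.
Qed.

End Aux.

Theorem proposition2p1 (R : realType) (A : lmodType R[i])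
    (mul : A -> A -> A) (Psi Psi' : A -> A) :
  is_comm_assoc_algebra mul ->
  is_algebra_automorphism mul Psi Psi' ->
  is_abelian mul Psi Psi' (commutant mul Psi Psi') /\
  max_abelian_containing_A mul Psi Psi' (commutant mul Psi Psi') /\
  (forall B : crossed A -> Prop, max_abelian_containing_A mul Psi Psi' B ->
     forall f, B f <-> commutant mul Psi Psi' f).
Proof.
move=> HA HP.
have ab := @comm_abelian _ _ _ _ _ HA HP.
have sub := @comm_sub _ _ _ _ _ HA HP.
have cA : contains_A (commutant mul Psi Psi').
  move=> b; apply/(@commutantP _ _ _ _ _ HA HP) => n a.
  rewrite !delta0E; case: eqP => [->|_].
    by case: HA => _ C _ _; apply: C.
  by rewrite (@mul0 _ _ _ HA) (@mulx0 _ _ _ HA).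
have key : forall B' : crossed A -> Prop, is_abelian mul Psi Psi' B' ->
    contains_A B' -> forall f, B' f -> commutant mul Psi Psi' f.
  by move=> B' abB cB f Bf a; apply: abB.
split => //; split.
  split => // B' _ abB' incl f Bf; apply: (key B') => // a; exact/incl/cA.
move=> B [sB abB cB maxB] f; split; first exact: key.
by apply: (maxB _ sub ab) => g; apply: key.
Qed.
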